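(* Let $G$ be a graph, $k\in\mathbb N$, and let $\mathcal F$ be a set of finite stars in $\vec S_k(G)$ all of which have finite interior. Let $\sigma\subseteq\vec S_k(G)$ be a star of left-tight separations, and let $X\subseteq\mathrm{int}(\sigma)$ with $|X|<k$. Suppose that either $X$ is a critical vertex set of $\mathrm{torso}(\sigma)$, or infinitely many separations $(A,B)\in\sigma$ satisfy $A\cap B=X$. Then there is a non-principal $\mathcal F$-tangle $\tau$ of $S_k(G)$ with $\sigma\subseteq\tau$.
   Context: Graphs may be infinite. A separation of $G$ is a set $\{A,B\}$ with $A,B\subseteq V(G)$, $A\cup B=V(G)$ and no edge of $G$ between $A\setminus B$ and $B\setminus A$; its order is $|A\cap B|$. $S_k(G)$ is the set of separations of order $<k$ and $\vec S_k(G)$ the set of their orientations $(A,B)$, $(B,A)$. Order: $(A,B)\le(C,D)$ iff $A\subseteq C$ and $B\supseteq D$. $(A,B)$ is left-tight if some component of $G[A\setminus B]$ has neighbourhood in $G$ equal to $A\cap B$. An orientation of $S_k(G)$ is a set containing exactly one orientation of each element; consistent if there are no distinct $\{A,B\},\{C,D\}\in S_k(G)$ with $(A,B)<(C,D)$, $(B,A)\in O$, $(C,D)\in O$; principal if for every set $Y$ of fewer than $k$ vertices it contains $(V(G)\setminus V(K),V(K)\cup Y)$ for some component $K$ of $G-Y$, and non-principal otherwise. A star is a set $\sigma$ of oriented finite-order separations, not containing $(V(G),V(G))$, with $(A,B)\le(D,C)$ for distinct $(A,B),(C,D)\in\sigma$; its interior is $\mathrm{int}(\sigma)=\bigcap_{(A,B)\in\sigma}B$;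 $\mathrm{torso}(\sigma)$ is obtained from $G[\mathrm{int}(\sigma)]$ by adding an edge $uv$ whenever distinct $u,v\in\mathrm{int}(\sigma)$ lie together in $A\cap B$ for some $(A,B)\in\sigma$. An $\mathcal F$-tangle of $S_k(G)$ is a consistent orientation of $S_k(G)$ having no element of $\mathcal F$ as a subset. A critical vertex set of a graph $H$ is a finite $X\subseteq V(H)$ such that infinitely many components $K$ of $H-X$ satisfy $N_H(K)=X$. *)

(* Defs.v *)
From Stdlib Require Import List.
Set Implicit Arguments.

Section Defs.
Variable V : Type.

Definition vset := V -> Prop.
Definition osep := (vset * vset)%type.

Definition finite_set (T : Type) (P : T -> Prop) : Prop :=
  exists l : list T, forall x, P x -> In x l.
Definition infinite_set (T : Type) (P : T -> Prop) : Prop := ~ finite_set P.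
Definition card_lt (P : vset) (k : nat) : Prop :=
  exists l : list V, NoDup l /\ (forall x, P x <-> In x l) /\ length l < k.

Definition sinter (A B : vset) : vset := fun v => A v /\ B v.
Definition subset (A B : vset) : Prop := forall v, A v -> B v.

Inductive reach (R : V -> V -> Prop) (S : vset) : V -> V -> Prop :=
| reach_refl v : S v -> reach R S v v
| reach_step u v w : reach R S u v -> R v w -> S w -> reach R S u w.

Definition is_comp (R : V -> V -> Prop) (S : vset) (K : vset) : Prop :=
  exists v, S v /\ K = reach R S v.

Definition nbh (R : V -> V -> Prop) (P : vset) (K : vset) : vset :=
  fun v => P v /\ ~ K v /\ exists u, K u /\ R u v.

Definition setT : vset := fun _ => True.

Variable E : V -> V -> Prop.

Definition is_sep (A B : vset) : Prop :=
  (forall v, A v \/ B v) /\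
  (forall u w, E u w -> A u -> ~ B u -> B w -> ~ A w -> False).

Definition in_Sk (k : nat) (p : osep) : Prop :=
  is_sep (fst p) (snd p) /\ card_lt (sinter (fst p) (snd p)) k.

Definition osep_le (p q : osep) : Prop :=
  subset (fst p) (fst q) /\ subset (snd q) (snd p).

Definition flip (p : osep) : osep := (snd p, fst p).

Definition left_tight (p : osep) : Prop :=
  exists K, is_comp E (fun v => fst p v /\ ~ snd p v) K /\
    (forall v, nbh E setT K v <-> sinter (fst p) (snd p) v).

Definition orientation (k : nat) (O : osep -> Prop) : Prop :=
  (forall p, O p -> in_Sk k p) /\
  (forall p, in_Sk k p -> O p \/ O (flip p)) /\
  (forall p, O p -> O (flip p) -> p = flip p).

Definition same_unoriented (p q : osep) : Prop := p = q \/ p = flip q.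

Definition consistent (k : nat) (O : osep -> Prop) : Prop :=
  ~ exists p q, in_Sk k p /\ in_Sk k q /\ ~ same_unoriented p q /\
      osep_le p q /\ p <> q /\ O (flip p) /\ O q.

Definition principal (k : nat) (O : osep -> Prop) : Prop :=
  forall Y : vset, card_lt Y k ->
    exists K, is_comp E (fun v => ~ Y v) K /\
      O (fun v => ~ K v, fun v => K v \/ Y v).

Definition fullsep : osep := (setT, setT).

Definition is_star (s : osep -> Prop) : Prop :=
  (forall p, s p -> is_sep (fst p) (snd p) /\
                    finite_set (sinter (fst p) (snd p))) /\
  ~ s fullsep /\
  (forall p q, s p -> s q -> p <> q -> osep_le p (flip q)).

Definition interior (s : osep -> Prop) : vset :=
  fun v => forall p, s p -> snd p v.

Definition torso_adj (s : osep -> Prop) (u v : V) : Prop :=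
  interior s u /\ interior s v /\ u <> v /\
  (E u v \/ exists p, s p /\ sinter (fst p) (snd p) u /\
                             sinter (fst p) (snd p) v).

Definition critical (R : V -> V -> Prop) (P : vset) (X : vset) : Prop :=
  finite_set X /\ subset X P /\
  infinite_set (fun K => is_comp R (fun v => P v /\ ~ X v) K /\
                         forall v, nbh R P K v <-> X v).

Definition F_tangle (k : nat) (F : (osep -> Prop) -> Prop) (O : osep -> Prop)
  : Prop :=
  orientation k O /\ consistent k O /\
  (forall s, F s -> ~ (forall p, s p -> O p)).

End Defs.

(* Main.v *)
Require Import Defs.
From Stdlib Require Import List Classical FunctionalExtensionality PropExtensionality.
Module UF.
From mathcomp Require Import all_boot classical_sets boolp filter.
Lemma ultra_exists (T : Type) (B : (T -> Prop) -> Prop)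
  (Bne : forall P, B P -> exists x, P x)
  (BI : forall P Q, B P -> B Q -> exists R, B R /\ forall x, R x -> P x /\ Q x)
  (BT : exists P, B P) :
  exists U : (T -> Prop) -> Prop,
    (forall P, B P -> U P) /\
    (forall P Q, U P -> U Q -> U (fun x => P x /\ Q x)) /\
    (forall P Q : T -> Prop, (forall x, P x -> Q x) -> U P -> U Q) /\
    (forall P, U P -> exists x, P x) /\
    (forall P, U P \/ U (fun x => ~ P x)).
Proof.
pose F := fun P : T -> Prop => exists Q, B Q /\ forall x, Q x -> P x.
have FF : ProperFilter F.
  apply: Build_ProperFilter_ex.
    move=> P [Q [BQ QP]]; have [x Qx] := Bne _ BQ; by exists x; apply: QP.
  split.
  - by case: BT => P BP; exists P.
  - move=> P Q [P' [BP' HP]] [Q' [BQ' HQ]].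
    have [R [BR HR]] := BI _ _ BP' BQ'.
    exists R; split => // x /HR [/HP ? /HQ ?]; by split.
  - move=> P Q PQ [P' [BP' HP]]; exists P'; split => // x /HP; exact: PQ.
have [G [GU FG]] := ultraFilterLemma FF.
exists G; split; [|split; [|split; [|split]]].
- move=> P BP; apply: FG; exists P; by split.
- move=> P Q GP GQ; exact: (filterI GP GQ).
- move=> P Q PQ GP; exact: (filterS PQ GP).
- move=> P GP; exact: (filter_ex_subproof (filter_not_empty G) GP).
- move=> P; exact: (in_ultra_setVsetC P GU).
Qed.
End UF.

Section Reach.
Variables (V : Type) (R : V -> V -> Prop) (S : vset V).
Hypothesis Rsym : forall u v, R u v -> R v u.

Lemma reach_S u w : reach R S u w -> S u /\ S w.
Proof. induction 1; intuition. Qed.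

Lemma reach_trans u v w : reach R S u v -> reach R S v w -> reach R S u w.
Proof.
  intros H1 H2; revert H1; induction H2 as [x Sx|a b c H IH Rbc Sc]; intro H1.
  - exact H1.
  - apply reach_step with b; auto.
Qed.

Lemma reach_sym u w : reach R S u w -> reach R S w u.
Proof.
  induction 1 as [v Sv| u v w H IH Rvw Sw].
  - now constructor.
  - apply reach_trans with v; auto.
    apply reach_step with (v := w); auto. constructor; auto.
    destruct (reach_S _ _ H); auto.
Qed.
End Reach.

Lemma card_fin V (P : vset V) k : card_lt P k -> finite_set P.
Proof. intros [l [_ [H _]]]. exists l. intros x Px. now apply H. Qed.

Lemma in_Sk_flip V E (E_sym : forall u v, E u v -> E v u) k (p : osep V) :
  in_Sk E k p -> in_Sk E k (flip p).
Proof.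
  destruct p as [A B]; unfold in_Sk, is_sep, flip; simpl.
  intros [[H1 H2] [l [Hn [Hl Hk]]]]; split; [split|].
  - intro v; destruct (H1 v); auto.
  - intros u w Euw Bu nAu Aw nBw. apply (H2 w u (E_sym _ _ Euw)); auto.
  - exists l; split; [|split]; auto. intro x; rewrite <- Hl; unfold sinter; tauto.
Qed.

Section FinAvoid.
Variables (V I : Type) (Ind : I -> Prop) (K : I -> vset V).
Hypothesis Hdisj : forall i j v, Ind i -> Ind j -> K i v -> K j v -> i = j.

Lemma fin_avoid (S : vset V) : finite_set S ->
  exists l, forall i v, Ind i -> ~ In i l -> K i v -> ~ S v.
Proof.
  intros [xs Hxs].
  assert (H : exists l, forall i v, Ind i -> ~ In i l -> K i v -> ~ In v xs).
  { clear Hxs. induction xs as [|x xs [l Hl]].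
    - exists nil; intros; simpl; tauto.
    - destruct (classic (exists i, Ind i /\ K i x)) as [[i [Ii Kix]]|Hno].
      + exists (i :: l). intros j v Ij nIn Kjv [->|Hin].
        * apply nIn; left; symmetry; eauto.
        * apply (Hl j v Ij); auto. intro; apply nIn; right; auto.
      + exists l. intros j v Ij nIn Kjv [->|Hin].
        * apply Hno; eauto.
        * eapply Hl; eauto. }
  destruct H as [l Hl]; exists l; intros i v Ii nIn Kiv Sv.
  eapply Hl; eauto.
Qed.
End FinAvoid.

Section Abstract.
Variables (V : Type) (E : V -> V -> Prop).
Hypothesis E_sym : forall u v, E u v -> E v u.
Variables (k : nat) (F : (osep V -> Prop) -> Prop).
Hypothesis HF : forall s, F s ->
     is_star E s /\ finite_set s /\ (forall p, s p -> in_Sk E k p) /\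
     finite_set (interior s).
Variable sigma : osep V -> Prop.
Hypothesis Hsig_Sk : forall p, sigma p -> in_Sk E k p.
Variable X : vset V.
Hypothesis HXk : card_lt X k.
Variables (I : Type) (Ind : I -> Prop) (K : I -> vset V).
Hypothesis Hinf : infinite_set Ind.
Hypothesis Hne : forall i, Ind i -> exists v, K i v.
Hypothesis Hdisj : forall i j v, Ind i -> Ind j -> K i v -> K j v -> i = j.
Hypothesis Hsig : forall p, sigma p -> exists l, forall i v,
  Ind i -> ~ In i l -> K i v -> snd p v /\ ~ fst p v.
Hypothesis Hnp : forall i j x y, Ind i -> Ind j -> K i x -> K j y ->
  reach E (fun v => ~ X v) x y -> i = j.

Definition Bse (T : vset V) : Prop :=
  exists l, forall i v, Ind i -> ~ In i l -> K i v -> T v.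

Lemma abstract_main : exists tau, F_tangle E k F tau /\ ~ principal E k tau /\
              (forall p, sigma p -> tau p).
Proof.
  destruct (@UF.ultra_exists V Bse) as [U [UB [UI [US [Une Uu]]]]].
  - intros P [l Hl].
    destruct (classic (exists i, Ind i /\ ~ In i l)) as [[i [Ii nIn]]|Hno].
    + destruct (Hne _ Ii) as [v Kv]. exists v; eauto.
    + exfalso; apply Hinf; exists l; intros i Ii.
      apply NNPP; intro; apply Hno; eauto.
  - intros P Q [l1 H1] [l2 H2]. exists (fun v => P v /\ Q v); split; auto.
    exists (l1 ++ l2). intros i v Ii nIn Kv; split.
    + apply (H1 i); auto. intro; apply nIn; apply in_or_app; auto.
    + apply (H2 i); auto. intro; apply nIn; apply in_or_app; auto.
  - exists (fun _ => True), nil; auto.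
  - assert (Ufin : forall S, finite_set S -> ~ U S).
    { intros S HS US0. destruct (@fin_avoid _ _ Ind K Hdisj _ HS) as [l Hl].
      assert (Hc : U (fun v => ~ S v)) by (apply UB; exists l; eauto).
      destruct (Une _ (UI _ _ US0 Hc)) as [v [Sv nSv]]; auto. }
    assert (UT : U (fun _ => True)) by (apply UB; exists nil; auto).
    exists (fun p => in_Sk E k p /\ U (fun v => snd p v /\ ~ fst p v)).
    split; [split; [split; [|split]|split]|split].
    + intros p [H _]; exact H.
    + intros p Hp.
      assert (Hnot : U (fun v => ~ sinter (fst p) (snd p) v)).
      { destruct (Uu (sinter (fst p) (snd p))) as [H|H]; auto.
        exfalso; apply (Ufin _ (card_fin _ _ _ (proj2 Hp)) H). }
      destruct (Uu (fun v => snd p v /\ ~ fst p v)) as [H|H]; [left; auto|right].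
      split; [apply in_Sk_flip; auto|].
      eapply US; [|exact (UI _ _ Hnot H)]; intros v Hv; simpl.
      destruct Hp as [[Hcov _] _]. simpl. unfold sinter in Hv.
      destruct (Hcov v); tauto.
    + intros p [_ H1] [_ H2]. exfalso.
      destruct (Une _ (UI _ _ H1 H2)) as [v Hv]; simpl in Hv; tauto.
    + intros [p [q [_ [_ [_ [[Hle1 Hle2] [_ [[_ H1] [_ H2]]]]]]]]].
      destruct (Une _ (UI _ _ H1 H2)) as [v Hv]; simpl in Hv.
      unfold subset in *. firstorder.
    + intros s Fs Hall. destruct (HF _ Fs) as [_ [[ps Hps] [_ Hint]]].
      apply (Ufin _ Hint).
      assert (H : forall qs, U (fun v => forall p, In p qs -> s p -> snd p v /\ ~ fst p v)).
      { induction qs as [|q qs IH].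
        - eapply US; [|exact UT]; intros v Hv; simpl. intros p [].
        - destruct (classic (s q)) as [sq|nsq].
          + eapply US; [|exact (UI _ _ IH (proj2 (Hall q sq)))]; intros v Hv; simpl.
            intros p [->|Hin] sp; [tauto|]. apply (proj1 Hv); auto.
          + eapply US; [|exact IH]; intros v Hv; simpl.
            intros p [->|Hin] sp; [tauto|]. apply Hv; auto. }
      eapply US; [|exact (H ps)]; intros v Hv; simpl.
      intros p sp. apply (Hv p (Hps p sp) sp).
    + intro Hpr. destruct (Hpr X HXk) as [D [[v0 [Sv0 ->]] [_ HD]]].
      simpl in HD.
      assert (UD : U (reach E (fun v => ~ X v) v0)).
      { eapply US; [|exact HD]; intros v Hv; simpl. destruct Hv as [_ Hv]. now apply NNPP. }
      destruct (classic (exists i, Ind i /\ exists x, K i x /\ reach E (fun v => ~ X v) v0 x))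
        as [[i [Ii [x [Kx Rx]]]]|Hno].
      * assert (Hc : U (fun v => ~ reach E (fun v => ~ X v) v0 v)).
        { apply UB. exists (i :: nil). intros j y Ij nIn Ky Ry.
          apply nIn; left. apply (Hnp _ _ _ _ Ii Ij Kx Ky).
          apply reach_trans with (v := v0); auto. apply reach_sym; auto. }
        destruct (Une _ (UI _ _ UD Hc)) as [y Hy]; tauto.
      * assert (Hc : U (fun v => ~ reach E (fun v => ~ X v) v0 v)).
        { apply UB. exists nil. intros j y Ij _ Ky Ry. apply Hno; eauto. }
        destruct (Une _ (UI _ _ UD Hc)) as [y Hy]; tauto.
    + intros p sp. split; auto. apply UB. destruct (Hsig _ sp) as [l Hl].
      exists l; eauto.
Qed.
End Abstract.

Theorem lemma3p8 (V : Type) (E : V -> V -> Prop)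
  (E_sym : forall u v, E u v -> E v u) (E_irr : forall v, ~ E v v)
  (k : nat) (F : (osep V -> Prop) -> Prop)
  (HF : forall s, F s ->
     is_star E s /\ finite_set s /\ (forall p, s p -> in_Sk E k p) /\
     finite_set (interior s))
  (sigma : osep V -> Prop)
  (Hsig_Sk : forall p, sigma p -> in_Sk E k p)
  (Hsig_star : is_star E sigma)
  (Hsig_tight : forall p, sigma p -> left_tight E p)
  (X : vset V) (HXint : subset X (interior sigma)) (HXk : card_lt X k)
  (Hcase : critical (torso_adj E sigma) (interior sigma) X \/
           infinite_set (fun p => sigma p /\
                           forall v, sinter (fst p) (snd p) v <-> X v)) :
  exists tau, F_tangle E k F tau /\ ~ principal E k tau /\
              (forall p, sigma p -> tau p).
Proof.
  destruct Hsig_star as [_ [_ Hstar]].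
  assert (Hsep : forall p, sigma p -> is_sep E (fst p) (snd p))
    by (intros p sp; exact (proj1 (Hsig_Sk p sp))).
  destruct Hcase as [Hcrit | Hinf].
  -
    destruct Hcrit as [_ [_ Hinfc]].
    set (T := torso_adj E sigma) in *.
    set (S := fun v => interior sigma v /\ ~ X v) in *.
    assert (Tsym : forall u v, T u v -> T v u).
    { intros u v [iu [iv [ne H]]]. split; [|split; [|split]]; auto.
      destruct H as [H|[p [sp [H1 H2]]]]; [left; auto|right; exists p; auto]. }
    assert (sep_int : forall p y, sigma p -> fst p y -> snd p y -> interior sigma y).
    { intros p y sp Ay By q sq. destruct (classic (p = q)) as [<-|ne]; auto.
      destruct (Hstar p q sp sq ne) as [H1 _]. apply H1, Ay. }
    assert (comp_S : forall i v, is_comp T S i -> i v -> S v).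
    { intros i v [a [_ ->]] H. exact (proj2 (reach_S _ _ _ _ _ H)). }
    assert (comp_closed : forall i w z, is_comp T S i -> i w -> T w z -> S z -> i z).
    { intros i w z [a [_ ->]] H Twz Sz. apply reach_step with (v := w); auto. }
    assert (comp_eq : forall i j v, is_comp T S i -> is_comp T S j -> i v -> j v -> i = j).
    { intros i j v [a [Sa ->]] [b [Sb ->]] Hav Hbv.
      assert (Rab : reach T S a b).
      { apply reach_trans with (v := v); auto. apply reach_sym; auto. }
      apply functional_extensionality; intro y.
      apply propositional_extensionality; split; intro H.
      - apply reach_trans with (v := a); auto. apply reach_sym; auto.
      - apply reach_trans with (v := b); auto. }
    apply (@abstract_main V E E_sym k F HF sigma Hsig_Sk X HXk (vset V)
             (fun K => is_comp T S K /\ forall v, nbh T (interior sigma) K v <-> X v)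
             (fun K => K) Hinfc).
    + intros i [[a [Sa ->]] _]. exists a. constructor; auto.
    + intros i j v [ci _] [cj _] Hi Hj. eauto.
    + intros p sp.
      destruct (@fin_avoid V (vset V)
             (fun K => is_comp T S K /\ forall v, nbh T (interior sigma) K v <-> X v)
             (fun K => K) (fun i j v Ii Ij => comp_eq i j v (proj1 Ii) (proj1 Ij))
             (sinter (fst p) (snd p)) (card_fin _ _ _ (proj2 (Hsig_Sk p sp))))
        as [l Hl].
      exists l. intros i v Ii nIn Kv.
      assert (Bv : snd p v) by (apply (proj1 (comp_S i v (proj1 Ii) Kv)); auto).
      split; auto. intro Av. apply (Hl i v Ii nIn Kv). split; auto.
    + intros i j x y [ci _] [cj _] Kx Ky Rxy.
      set (Inv := fun w => (interior sigma w -> i w) /\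
                (~ interior sigma w -> exists p, sigma p /\ fst p w /\ ~ snd p w /\
                     forall z, fst p z -> snd p z -> ~ X z -> i z)).
      assert (Hinv : forall u w, reach E (fun v => ~ X v) u w -> Inv u -> Inv w).
      { induction 1 as [v Sv|a b c H IH Ebc Sc]; auto.
        intro Ha. destruct (IH Ha) as [Ib1 Ib2].
        destruct (reach_S _ _ _ _ _ H) as [_ nXb].
        assert (Hcl : forall p y, sigma p -> fst p y -> snd p y -> ~ X y -> i y ->
                  forall z, fst p z -> snd p z -> ~ X z -> i z).
        { intros p y0 sp Ay By nXy iy z Az Bz nXz.
          destruct (classic (y0 = z)) as [<-|ne]; auto.
          apply (comp_closed i y0 z ci iy).
          - split; [apply (sep_int p); auto|split; [apply (sep_int p); auto|split; auto]].
            right; exists p; split; auto. split; split; auto.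
          - split; auto. apply (sep_int p); auto. }
        destruct (classic (interior sigma b)) as [ib|nib].
        - specialize (Ib1 ib).
          destruct (classic (interior sigma c)) as [ic|nic].
          + assert (ic' : i c).
            { apply (comp_closed i b c ci Ib1).
              - split; auto. split; auto. split; auto.
                intros ->. exact (E_irr c Ebc).
              - split; auto. }
            split; auto. intros []; auto.
          + split; [tauto|intros _].
            destruct (not_all_ex_not _ _ nic) as [p Hp].
            assert (sp : sigma p) by (apply NNPP; intro; apply Hp; intro; tauto).
            assert (nBc : ~ snd p c) by (intro; apply Hp; auto).
            destruct (Hsep p sp) as [Hcov Hed].
            assert (Ac : fst p c) by (destruct (Hcov c); tauto).
            assert (Bb : snd p b) by (apply ib; auto).
            assert (Ab : fst p b).
            { apply NNPP; intro nAb. exact (Hed c b (E_sym _ _ Ebc) Ac nBc Bb nAb). }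
            exists p; split; auto. split; auto. split; auto.
            apply (Hcl p b); auto.
        - destruct (Ib2 nib) as [p [sp [Ab [nBb Hclp]]]].
          destruct (Hsep p sp) as [Hcov Hed].
          assert (Ac : fst p c).
          { apply NNPP; intro nAc. destruct (Hcov c) as [|Bc]; [tauto|].
            exact (Hed b c Ebc Ab nBb Bc nAc). }
          destruct (classic (snd p c)) as [Bc|nBc].
          + assert (ic : i c) by (apply Hclp; auto).
            split; auto. intro nic; exfalso; apply nic. apply (sep_int p); auto.
          + split.
            * intro ic; exfalso; apply nBc, ic; auto.
            * intros _. exists p; auto. }
      assert (Ix : Inv x).
      { split; auto. intro nix; exfalso; apply nix. exact (proj1 (comp_S i x ci Kx)). }
      destruct (Hinv _ _ Rxy Ix) as [Iy _].
      apply (comp_eq i j y ci cj); auto. apply Iy. exact (proj1 (comp_S j y cj Ky)).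
  -
    apply (@abstract_main V E E_sym k F HF sigma Hsig_Sk X HXk (osep V)
             (fun p => sigma p /\ forall v, sinter (fst p) (snd p) v <-> X v)
             (fun p v => fst p v /\ ~ snd p v) Hinf).
    + intros p [sp _]. destruct (Hsig_tight p sp) as [K0 [[v [Sv _]] _]].
      exists v; exact Sv.
    + intros i j v [si _] [sj _] [Ai nBi] [Aj nBj].
      apply NNPP; intro ne. destruct (Hstar i j si sj ne) as [H1 _].
      apply nBj, H1, Ai.
    + intros p sp. exists (p :: nil). intros i v [si _] nIn [Ai nBi].
      assert (ne : i <> p) by (intro; apply nIn; left; auto).
      destruct (Hstar i p si sp ne) as [H1 H2]. simpl in H1, H2.
      split; [apply H1, Ai|]. intro Ap; apply nBi, H2, Ap.
    + intros i j x y [si HXi] Ij Kx Ky Rxy.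
      assert (Hinv : forall u w, reach E (fun v => ~ X v) u w ->
                fst i u /\ ~ snd i u -> fst i w /\ ~ snd i w).
      { induction 1 as [v Sv|a b c H IH Ebc Sc]; auto.
        intro Ha; destruct (IH Ha) as [Ab nBb].
        destruct (Hsep i si) as [Hcov Hed].
        assert (Ac : fst i c).
        { apply NNPP; intro nAc. destruct (Hcov c) as [|Bc]; [tauto|].
          exact (Hed b c Ebc Ab nBb Bc nAc). }
        split; auto. intro Bc. apply Sc, HXi. split; auto. }
      destruct (Hinv _ _ Rxy Kx) as [Ay nBy].
      apply NNPP; intro ne. destruct Ij as [sj _].
      destruct Ky as [Aj nBj].
      destruct (Hstar i j si sj ne) as [H1 _]. apply nBj, H1, Ay.
Qed.
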